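(* Let $\mathcal{P}$ be a partition of $\mathbb{R}$. Suppose there exists $D\in(0,\infty)$ that is a strict pairwise bound for every $X\in\mathcal{P}$, and let $\epsilon\in(0,\infty)$ be such that $|\mathcal{N}_{\epsilon}(p)|\leq 2$ for all $p\in\mathbb{R}$. Then $\epsilon\leq\frac{D}{2}$.
   Context: $D$ is a strict pairwise bound for $X\subseteq\mathbb{R}$ if $|x-y|<D$ for all $x,y\in X$. $\mathcal{N}_{\epsilon}(p)=\{X\in\mathcal{P}: X\cap[p-\epsilon,p+\epsilon]\neq\emptyset\}$. *)

(* Defs.v *)
From Stdlib Require Import Reals.
Open Scope R_scope.

Definition is_partition (P : (R -> Prop) -> Prop) : Prop :=
  (forall X, P X -> exists x, X x) /\
  (forall X Y, P X -> P Y -> X <> Y -> forall x, X x -> Y x -> False) /\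
  (forall x : R, exists X, P X /\ X x).

Definition strict_pairwise_bound (D : R) (X : R -> Prop) : Prop :=
  forall x y, X x -> X y -> Rabs (x - y) < D.

Definition N_eps (P : (R -> Prop) -> Prop) (eps p : R) (X : R -> Prop) : Prop :=
  P X /\ exists x, X x /\ p - eps <= x <= p + eps.

Definition card_le2 (F : (R -> Prop) -> Prop) : Prop :=
  forall X Y Z, F X -> F Y -> F Z -> X = Y \/ X = Z \/ Y = Z.

(* Main.v *)
Require Import Defs.
From Stdlib Require Import Reals Lra ZArith.
Open Scope R_scope.

Theorem mainTheorem19 (P : (R -> Prop) -> Prop) (D eps : R) :
  is_partition P ->
  0 < D ->
  (forall X, P X -> strict_pairwise_bound D X) ->
  0 < eps ->
  (forall p : R, card_le2 (N_eps P eps p)) ->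
  eps <= D / 2.
Proof.
  intros [_ [_ Hcov]] HD Hb He Hc.
  destruct (Rle_or_lt eps (D/2)) as [H|H]; [exact H|exfalso].
  set (h := eps - D/2).
  assert (Hh : 0 < h) by (unfold h; lra).
  assert (step : forall X x, P X -> X x -> X (x - h)).
  { intros X x PX Xx.
    destruct (Hcov (x + D)) as [Y [PY Yx]].
    destruct (Hcov (x - h)) as [Z [PZ Zx]].
    assert (NX : N_eps P eps (x + D/2) X) by (split; [exact PX| exists x; split; [exact Xx|unfold h in *; lra]]).
    assert (NY : N_eps P eps (x + D/2) Y) by (split; [exact PY| exists (x+D); split; [exact Yx|unfold h in *; lra]]).
    assert (NZ : N_eps P eps (x + D/2) Z) by (split; [exact PZ| exists (x-h); split; [exact Zx|unfold h in *; lra]]).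
    destruct (Hc _ X Y Z NX NY NZ) as [E|[E|E]]; subst.
    - pose proof (Hb _ PX x (x+D) Xx Yx).
      replace (x - (x+D)) with (-D) in H0 by ring.
      rewrite Rabs_Ropp, Rabs_pos_eq in H0; lra.
    - exact Zx.
    - pose proof (Hb _ PY (x+D) (x-h) Yx Zx).
      replace (x + D - (x-h)) with (D+h) in H0 by ring.
      rewrite Rabs_pos_eq in H0; lra. }
  destruct (Hcov 0) as [X [PX X0]].
  assert (Hn : forall n, X (0 - INR n * h)).
  { induction n.
    - simpl. replace (0 - 0 * h) with 0 by ring. exact X0.
    - rewrite S_INR. replace (0 - (INR n + 1) * h) with ((0 - INR n * h) - h) by ring.
      apply step; assumption. }
  destruct (archimed (D / h)) as [Hup _].
  assert (Hpos : (0 <= up (D/h))%Z).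
  { apply le_IZR. assert (0 < D/h) by (apply Rdiv_lt_0_compat; lra). lra. }
  pose (n := Z.to_nat (up (D/h))).
  assert (HnR : INR n = IZR (up (D/h))).
  { unfold n. rewrite INR_IZR_INZ, Z2Nat.id; auto. }
  pose proof (Hb _ PX 0 (0 - INR n * h) X0 (Hn n)).
  replace (0 - (0 - INR n * h)) with (INR n * h) in H0 by ring.
  rewrite Rabs_pos_eq in H0.
  - rewrite HnR in H0.
    assert (D < IZR (up (D/h)) * h).
    { apply (Rmult_lt_compat_r h) in Hup; [|lra].
      unfold Rdiv in Hup. rewrite Rmult_assoc, Rinv_l, Rmult_1_r in Hup; lra. }
    lra.
  - apply Rmult_le_pos; [apply pos_INR|lra].
Qed.
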